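(* Let $\mathcal{G}$ be an SPQN over binary random variables $X_1,\dots,X_N$ which is conditionally complete, conditionally decomposable and conditionally sound. Then for every node $v$ of $\mathcal{G}$, $\Psi_v$ is a normalized probability function over the variables indexed by $\mathrm{eff}(v)$ conditioned on the variables indexed by $\mathrm{cond}(v)$; precisely, for every $\mathbf b\in\{0,1,*\}^N$ with $b_i\in\{0,1\}$ for $i\in\mathrm{cond}(v)$ and $b_i=*$ for $i\notin\mathrm{cond}(v)$, $$\sum_{\substack{\mathbf x\in\{0,1,*\}^N:\\ x_i=b_i\ \forall i\notin \mathrm{eff}(v),\\ x_i\in\{0,1\}\ \forall i\in\mathrm{eff}(v)}}\Psi_v(\mathbf x)=1 .$$
   Context: An SPQN (Sum-Product-Quotient Network) over binary variables $X_1,\dots,X_N$ is a rooted directed acyclic computational graph evaluated on inputs $\mathbf x\in\{0,1,*\}^N$ ($*$ denotes a missing value). Its nodes are of four types. Leaves are indicators $\mathbb 1[x_i=a]$, $i\in[N]$, $a\in\{0,1\}$, whose value is $1$ if $x_i=a$, $0$ if $x_i=1-a$, and $1$ if $x_i=*$. A sum node $v$ outputs $\sum_{c}w_c\Psi_c(\mathbf x)$ over its children $c$, with strictly positive weights summing to $1$. A product node outputs $\prod_c\Psi_c(\mathbf x)$ over its children. A quotient node $v$ has exactly two children, a numerator $\mathrm{num}(v)$ and a denominator $\mathrm{den}(v)$, and outputs $\Psi_{\mathrm{num}(v)}(\mathbf x)/\Psi_{\mathrm{den}(v)}(\mathbf x)$. $\Psi_v$ denotes the function computed by the subgraph rooted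 at $v$; $\mathrm{ch}(v)$ is the set of children of $v$. Scope: $\mathrm{sc}(v)=\{i\}$ for a leaf of variable $i$, and $\mathrm{sc}(v)=\bigcup_{c\in\mathrm{ch}(v)}\mathrm{sc}(c)$ otherwise. Effective scope: $\mathrm{eff}(v)=\{i\}$ for a leaf of variable $i$; $\mathrm{eff}(v)=\bigcup_{c\in\mathrm{ch}(v)}\mathrm{eff}(c)$ for sum and product nodes; $\mathrm{eff}(v)=\mathrm{eff}(\mathrm{num}(v))\setminus\mathrm{eff}(\mathrm{den}(v))$ for quotient nodes. Conditioning scope: $\mathrm{cond}(v)=\mathrm{sc}(v)\setminus\mathrm{eff}(v)$. Conditionally complete: for every sum node $v$ and all $c_1,c_2\in\mathrm{ch}(v)$, $\mathrm{eff}(c_1)=\mathrm{eff}(c_2)$. Conditionally decomposable: for every product node $v$, (1) for all distinct $c_1,c_2\in\mathrm{ch}(v)$, $\mathrm{eff}(c_1)\cap\mathrm{eff}(c_2)=\emptyset$; and (2) the directed graph on vertex set $\mathrm{ch}(v)$ with an edge $c'\to c''$ whenever $\mathrm{eff}(c')\cap\mathrm{cond}(c'')\neq\emptyset$ is acyclic. Conditionally sound: for every quotient node $v$, $\Psi_{\mathrm{den}(v)}$ is strictly positive on all inputs, $\mathrm{cond}(\mathrm{den}(v))\subseteq\mathrm{cond}(\mathrm{num}(v))$, $\mathrm{eff}(\mathrm{den}(v))\subseteq\mathrm{eff}(\mathrm{num}(v))$, and for all $\mathbf a\in\{0,1,*\}^N$, $\Psi_{\mathrm{den}(v)}(\mathbf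 a)=\sum_{\mathbf z}\Psi_{\mathrm{num}(v)}(\mathbf z)$, the sum over $\mathbf z\in\{0,1,*\}^N$ with $z_i=a_i$ for $i\notin\mathrm{eff}(v)$ and $z_i\in\{0,1\}$ for $i\in\mathrm{eff}(v)$. *)

(* Defs.v *)
(* SPQNs represented as finite trees (unfolding of the DAG). *)
From HB Require Import structures.
From mathcomp Require Import all_boot all_order all_algebra.
Set Implicit Arguments. Unset Strict Implicit. Unset Printing Implicit Defensive.
Import Order.TTheory GRing.Theory Num.Theory.
Local Open Scope ring_scope.

Inductive spqn (R : Type) (N : nat) : Type :=
| SLeaf of 'I_N & bool
| SSum of seq (R * spqn R N)
| SProd of seq (spqn R N)
| SQuot of spqn R N & spqn R N.

Arguments SLeaf {R N}.
Arguments SSum {R N}.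
Arguments SProd {R N}.
Arguments SQuot {R N}.

(* inputs x in {0,1,*}^N : None encodes the missing value * *)
Definition input (N : nat) := {ffun 'I_N -> option bool}.

Fixpoint eval (R : realFieldType) (N : nat) (g : spqn R N) (x : input N) : R :=
  match g with
  | SLeaf i a => if x i is Some b then (if b == a then 1 else 0) else 1
  | SSum cs =>
      (fix f (l : seq (R * spqn R N)) : R :=
         match l with [::] => 0 | (w, c) :: l' => w * eval c x + f l' end) cs
  | SProd cs =>
      (fix f (l : seq (spqn R N)) : R :=
         match l with [::] => 1 | c :: l' => eval c x * f l' end) cs
  | SQuot n d => eval n x / eval d x
  end.

Fixpoint sc (R : Type) (N : nat) (g : spqn R N) : {set 'I_N} :=
  match g with
  | SLeaf i _ => [set i]
  | SSum cs =>
      (fix f (l : seq (R * spqn R N)) : {set 'I_N} :=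
         match l with [::] => set0 | (_, c) :: l' => sc c :|: f l' end) cs
  | SProd cs =>
      (fix f (l : seq (spqn R N)) : {set 'I_N} :=
         match l with [::] => set0 | c :: l' => sc c :|: f l' end) cs
  | SQuot n d => sc n :|: sc d
  end.

Fixpoint eff (R : Type) (N : nat) (g : spqn R N) : {set 'I_N} :=
  match g with
  | SLeaf i _ => [set i]
  | SSum cs =>
      (fix f (l : seq (R * spqn R N)) : {set 'I_N} :=
         match l with [::] => set0 | (_, c) :: l' => eff c :|: f l' end) cs
  | SProd cs =>
      (fix f (l : seq (spqn R N)) : {set 'I_N} :=
         match l with [::] => set0 | c :: l' => eff c :|: f l' end) cs
  | SQuot n d => eff n :\: eff d
  end.

Definition cond (R : Type) (N : nat) (g : spqn R N) : {set 'I_N} := sc g :\: eff g.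

Fixpoint all_nodes (R : Type) (N : nat) (P : spqn R N -> Prop) (g : spqn R N) : Prop :=
  P g /\
  match g with
  | SLeaf _ _ => True
  | SSum cs =>
      (fix f (l : seq (R * spqn R N)) : Prop :=
         match l with [::] => True | (_, c) :: l' => all_nodes P c /\ f l' end) cs
  | SProd cs =>
      (fix f (l : seq (spqn R N)) : Prop :=
         match l with [::] => True | c :: l' => all_nodes P c /\ f l' end) cs
  | SQuot n d => all_nodes P n /\ all_nodes P d
  end.

Definition dflt (R : Type) (N : nat) : spqn R N := SProd [::].

Definition sum_marg (R : realFieldType) (N : nat) (E : {set 'I_N}) (b : input N)
    (f : input N -> R) : R :=
  \sum_(z : input N | [forall i, if i \in E then z i != None else z i == b i]) f z.

Definition weights_ok (R : realFieldType) (N : nat) (g : spqn R N) : Prop :=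
  match g with
  | SSum cs => all (fun w => 0 < w) (map fst cs) /\ \sum_(p <- cs) p.1 = 1
  | _ => True
  end.

Definition cond_complete_node (R : realFieldType) (N : nat) (g : spqn R N) : Prop :=
  match g with
  | SSum cs =>
      forall j k : 'I_(size cs),
        eff (nth (dflt R N) (map snd cs) j) = eff (nth (dflt R N) (map snd cs) k)
  | _ => True
  end.

Definition dep_rel (R : Type) (N : nat) (cs : seq (spqn R N)) : rel 'I_(size cs) :=
  fun j k => eff (nth (dflt R N) cs j) :&: cond (nth (dflt R N) cs k) != set0.

Definition acyclic_rel (T : finType) (e : rel T) : Prop :=
  forall j k, e j k -> ~~ connect e k j.

Definition cond_decomposable_node (R : realFieldType) (N : nat) (g : spqn R N) : Prop :=
  match g with
  | SProd cs =>
      (forall j k : 'I_(size cs), j != k ->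
         eff (nth (dflt R N) cs j) :&: eff (nth (dflt R N) cs k) = set0)
      /\ acyclic_rel (@dep_rel R N cs)
  | _ => True
  end.

Definition cond_sound_node (R : realFieldType) (N : nat) (g : spqn R N) : Prop :=
  match g with
  | SQuot n d =>
      (forall x : input N, 0 < eval d x)
      /\ cond d \subset cond n
      /\ eff d \subset eff n
      /\ (forall a : input N, eval d a = sum_marg (eff (SQuot n d)) a (eval n))
  | _ => True
  end.

Definition spqn_valid (R : realFieldType) (N : nat) (G : spqn R N) : Prop :=
  all_nodes (@weights_ok R N) G.
Definition cond_complete (R : realFieldType) (N : nat) (G : spqn R N) : Prop :=
  all_nodes (@cond_complete_node R N) G.
Definition cond_decomposable (R : realFieldType) (N : nat) (G : spqn R N) : Prop :=
  all_nodes (@cond_decomposable_node R N) G.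
Definition cond_sound (R : realFieldType) (N : nat) (G : spqn R N) : Prop :=
  all_nodes (@cond_sound_node R N) G.

(* Main.v *)
Require Import Defs.
From HB Require Import structures.
From mathcomp Require Import all_boot all_order all_algebra.
Import Order.TTheory GRing.Theory Num.Theory.
Local Open Scope ring_scope.
Set Implicit Arguments. Unset Strict Implicit.

Definition forallS (R : Type) (N : nat) (Q : spqn R N -> Prop) :=
  fix f (l : seq (R * spqn R N)) : Prop :=
    match l with [::] => True | (_, c) :: l' => Q c /\ f l' end.
Definition forallL (R : Type) (N : nat) (Q : spqn R N -> Prop) :=
  fix f (l : seq (spqn R N)) : Prop :=
    match l with [::] => True | c :: l' => Q c /\ f l' end.

Fixpoint spqn_ind2 (R : Type) (N : nat) (P : spqn R N -> Prop)
  (HL : forall i a, P (SLeaf i a))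
  (HS : forall cs, forallS P cs -> P (SSum cs))
  (HP : forall cs, forallL P cs -> P (SProd cs))
  (HQ : forall n d, P n -> P d -> P (SQuot n d)) (g : spqn R N) {struct g} : P g :=
  match g with
  | SLeaf i a => HL i a
  | SSum cs => HS cs ((fix f (l : seq (R * spqn R N)) : forallS P l :=
      match l return forallS P l with
      | [::] => I
      | (w, c) :: l' => conj (spqn_ind2 HL HS HP HQ c) (f l') end) cs)
  | SProd cs => HP cs ((fix f (l : seq (spqn R N)) : forallL P l :=
      match l return forallL P l with
      | [::] => I
      | c :: l' => conj (spqn_ind2 HL HS HP HQ c) (f l') end) cs)
  | SQuot n d => HQ n d (spqn_ind2 HL HS HP HQ n) (spqn_ind2 HL HS HP HQ d)
  end.

Lemma forallS_nth (R : Type) (N : nat) (Q : spqn R N -> Prop) cs :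
  forallS Q cs <-> (forall x0 (i : nat), (i < size cs)%N -> Q (nth x0 cs i).2).
Proof.
elim: cs => [|[w c] cs IH] /=; first by split.
split.
- by move=> [Hc /IH Hcs] x0 [|i] //= Hi; apply: Hcs.
- move=> H; split; first exact: (H (w, c) 0%N).
  by apply/IH => x0 i Hi; apply: (H x0 i.+1).
Qed.

Lemma forallP_nth (R : Type) (N : nat) (Q : spqn R N -> Prop) cs :
  forallL Q cs <-> (forall x0 (i : nat), (i < size cs)%N -> Q (nth x0 cs i)).
Proof.
elim: cs => [|c cs IH] /=; first by split.
split.
- by move=> [Hc /IH Hcs] x0 [|i] //= Hi; apply: Hcs.
- move=> H; split; first exact: (H c 0%N).
  by apply/IH => x0 i Hi; apply: (H x0 i.+1).
Qed.

Section Eqs.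
End Eqs.

Lemma evalS (R : realFieldType) (N : nat) (cs : seq (R * spqn R N)) x :
  eval (SSum cs) x = \sum_(i < size cs) (nth (0, dflt R N) cs i).1 * eval (nth (0, dflt R N) cs i).2 x.
Proof.
rewrite -(big_mkord xpredT (fun i => (nth (0, dflt R N) cs i).1 * eval (nth (0, dflt R N) cs i).2 x)).
rewrite -(big_nth (0, dflt R N) xpredT (fun p => p.1 * eval p.2 x)).
by elim: cs => [|[w c] cs IH]; rewrite ?big_nil ?big_cons //= -IH.
Qed.

Lemma evalP (R : realFieldType) (N : nat) (cs : seq (spqn R N)) x :
  eval (SProd cs) x = \prod_(i < size cs) eval (nth (dflt R N) cs i) x.
Proof.
rewrite -(big_mkord xpredT (fun i => eval (nth (dflt R N) cs i) x)).
rewrite -(big_nth (dflt R N) xpredT (fun p => eval p x)).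
by elim: cs => [|c cs IH]; rewrite ?big_nil ?big_cons //= -IH.
Qed.

Lemma effS (R : Type) (N : nat) (cs : seq (R * spqn R N)) x0 :
  eff (SSum cs) = \bigcup_(i < size cs) eff (nth x0 cs i).2.
Proof.
rewrite -(big_mkord xpredT (fun i => eff (nth x0 cs i).2)).
rewrite -(big_nth x0 xpredT (fun p => eff p.2)).
by elim: cs => [|[w c] cs IH]; rewrite ?big_nil ?big_cons //= -IH.
Qed.

Lemma scS (R : Type) (N : nat) (cs : seq (R * spqn R N)) x0 :
  sc (SSum cs) = \bigcup_(i < size cs) sc (nth x0 cs i).2.
Proof.
rewrite -(big_mkord xpredT (fun i => sc (nth x0 cs i).2)).
rewrite -(big_nth x0 xpredT (fun p => sc p.2)).
by elim: cs => [|[w c] cs IH]; rewrite ?big_nil ?big_cons //= -IH.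
Qed.

Lemma effP (R : Type) (N : nat) (cs : seq (spqn R N)) :
  eff (SProd cs) = \bigcup_(i < size cs) eff (nth (dflt R N) cs i).
Proof.
rewrite -(big_mkord xpredT (fun i => eff (nth (dflt R N) cs i))).
rewrite -(big_nth (dflt R N) xpredT (fun p => eff p)).
by elim: cs => [|c cs IH]; rewrite ?big_nil ?big_cons //= -IH.
Qed.

Lemma scP (R : Type) (N : nat) (cs : seq (spqn R N)) :
  sc (SProd cs) = \bigcup_(i < size cs) sc (nth (dflt R N) cs i).
Proof.
rewrite -(big_mkord xpredT (fun i => sc (nth (dflt R N) cs i))).
rewrite -(big_nth (dflt R N) xpredT (fun p => sc p)).
by elim: cs => [|c cs IH]; rewrite ?big_nil ?big_cons //= -IH.
Qed.

Lemma eval_local (R : realFieldType) (N : nat) (g : spqn R N) :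
  forall x y : input N, (forall i, i \in sc g -> x i = y i) -> eval g x = eval g y.
Proof.
elim/spqn_ind2: g.
- by move=> i a x y H /=; rewrite H // set11.
- move=> cs /forallS_nth IH x y H; rewrite !evalS; apply: eq_bigr => i _.
  congr (_ * _); apply: IH => // j Hj; apply: H.
  rewrite (scS _ (0, dflt R N)); apply/bigcupP; by exists i.
- move=> cs /forallP_nth IH x y H; rewrite !evalP; apply: eq_bigr => i _.
  apply: IH => // j Hj; apply: H.
  rewrite scP; apply/bigcupP; by exists i.
- move=> n d IHn IHd x y H /=.
  rewrite (IHn x y) ?(IHd x y) // => j Hj; apply: H; by rewrite inE Hj ?orbT.
Qed.

Definition mdom (N : nat) (E : {set 'I_N}) (b z : input N) : bool :=
  [forall i, if i \in E then z i != None else z i == b i].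

Lemma sum_margE (R : realFieldType) (N : nat) E b (f : input N -> R) :
  sum_marg E b f = \sum_(z | mdom E b z) f z.
Proof. by []. Qed.

Lemma mdomP (N : nat) (E : {set 'I_N}) (b z : input N) :
  reflect (forall i, if i \in E then z i <> None else z i = b i) (mdom E b z).
Proof.
apply: (iffP forallP) => H i; have := H i; case: (i \in E) => //.
- by move=> /eqP.
- by move=> /eqP.
- by move=> /eqP.
- by move=> ->.
Qed.

Lemma sum_marg_split (R : realFieldType) (N : nat) (A B : {set 'I_N}) b (F : input N -> R) :
  A :&: B = set0 ->
  sum_marg (A :|: B) b F = sum_marg A b (fun z => sum_marg B z F).
Proof.
move=> HAB; rewrite !sum_margE.
have dis i : i \in A -> i \in B -> False.
  by move=> HA HB; move/setP/(_ i): HAB; rewrite !inE HA HB.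
set reset := fun y : input N => [ffun i => if i \in B then b i else y i].
rewrite (partition_big reset (mdom A b)); last first.
  move=> y /mdomP Hy; apply/mdomP => i; rewrite ffunE.
  have := Hy i; rewrite inE.
  case: (boolP (i \in A)) => HA; case: (boolP (i \in B)) => HB //=;
    try by case: (dis i HA HB).
apply: eq_bigr => z /mdomP Hz; apply: eq_bigl => y.
apply/idP/idP.
- move=> /andP [/mdomP Hy /eqP Hr]; apply/mdomP => i.
  have := Hy i; have := congr1 (fun f : input N => f i) Hr; rewrite inE ffunE.
  case: (boolP (i \in A)) => HA; case: (boolP (i \in B)) => HB //=; congruence.
- move=> /mdomP Hy; apply/andP; split.
  + apply/mdomP => i; have := Hy i; have := Hz i; rewrite inE.
    case: (boolP (i \in A)) => HA; case: (boolP (i \in B)) => HB //=; congruence.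
  + apply/eqP/ffunP => i; rewrite ffunE; have := Hy i; have := Hz i.
    case: (boolP (i \in A)) => HA; case: (boolP (i \in B)) => HB //=;
      try by case: (dis i HA HB).
    all: congruence.
Qed.

Lemma marg0 (R : realFieldType) (N : nat) (b : input N) :
  sum_marg set0 b (fun _ => (1 : R)) = 1.
Proof.
rewrite sum_margE (big_pred1 b) // => z; apply/mdomP/eqP.
- by move=> H; apply/ffunP => i; have := H i; rewrite inE.
- by move=> -> i; rewrite inE.
Qed.

Lemma setD1_in (T : finType) (j k : T) (S : {set T}) : k \in S :\ j -> k \in S.
Proof. by rewrite inE => /andP []. Qed.

Lemma prod_norm (R : realFieldType) (N : nat) (I : finType)
  (fE fC : I -> {set 'I_N}) (f : I -> input N -> R)
  (Hloc : forall k (x y : input N), (forall i, i \in fE k :|: fC k -> x i = y i) -> f k x = f k y)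
  (Hnorm : forall k (b : input N), (forall i, i \in fC k -> b i != None) -> sum_marg (fE k) b (f k) = 1)
  (HEC : forall k, fE k :&: fC k = set0)
  (Hdisj : forall j k, j != k -> fE j :&: fE k = set0)
  (Hacyc : acyclic_rel (fun j k => fE j :&: fC k != set0)) :
  forall (S : {set I}) (b : input N),
  (forall i, i \in \bigcup_(k in S) fC k -> i \notin \bigcup_(k in S) fE k -> b i != None) ->
  sum_marg (\bigcup_(k in S) fE k) b (fun z => \prod_(k in S) f k z) = 1.
Proof.
move=> S; move: {2}#|S| (leqnn #|S|) => n; elim: n S => [|n IH] S HS b Hb.
  move: HS; rewrite leqn0 cards_eq0 => /eqP ->.
  rewrite big_set0 sum_margE (eq_bigr (fun _ => 1)); first by rewrite -sum_margE marg0.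
  by move=> z _; rewrite big_set0.
case: (set_0Vmem S) => [HS0|[j0 Hj0]].
  rewrite HS0 big_set0 sum_margE (eq_bigr (fun _ => 1)); first by rewrite -sum_margE marg0.
  by move=> z _; rewrite big_set0.
set e := (fun j k => fE j :&: fC k != set0).
pose reach j := #|[set k | connect e j k]|.
case: (arg_minnP reach Hj0) => j Hj Hmin.
have {}Hj : j \in S := Hj.
have nosink k : k \in S -> fE j :&: fC k = set0.
  move=> Hk; apply/eqP; apply: contraT => Hejk.
  have Hnc := Hacyc j k Hejk.
  have : [set l | connect e k l] \proper [set l | connect e j l].
    apply/properP; split.
      by apply/subsetP => l; rewrite !inE => Hl; apply: connect_trans Hl; apply: connect1.
    by exists j; rewrite !inE ?connect0.
  move/proper_card; rewrite ltnNge -/(reach k) -/(reach j) Hmin //.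
have eqc : \bigcup_(k in S) fE k = fE j :|: \bigcup_(k in S :\ j) fE k.
  by rewrite (big_setD1 j Hj).
have dis : (\bigcup_(k in S :\ j) fE k) :&: fE j = set0.
  apply/setP => i; rewrite !inE; apply/negbTE/negP => /andP [/bigcupP [k Hk Hik] Hij].
  move: Hk; rewrite inE => /andP [Hkj _].
  have Hjk : j != k.
  idtac.
  by rewrite eq_sym; move: Hkj; rewrite inE.
  by move/setP/(_ i): (Hdisj j k Hjk); rewrite !inE Hij Hik.
rewrite eqc setUC sum_marg_split //.
rewrite sum_margE (eq_bigr (fun z => \prod_(k in S :\ j) f k z)); last first.
  move=> z /mdomP Hz.
  rewrite sum_margE (eq_bigr (fun y => f j y * \prod_(k in S :\ j) f k z)); last first.
    move=> y /mdomP Hy; rewrite (big_setD1 j Hj) /=; congr (_ * _).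
    apply: eq_bigr => k; rewrite !inE => /andP [Hkj Hk]; apply: Hloc => i Hi.
    have Hij : i \notin fE j.
      apply/negP => Hij; move: Hi; rewrite inE => /orP [Hik|Hik].
        have Hjk : j != k by rewrite eq_sym.
        by move/setP/(_ i): (Hdisj j k Hjk); rewrite !inE Hij Hik.
      by move/setP/(_ i): (nosink k Hk); rewrite !inE Hij Hik.
    by have := Hy i; rewrite (negbTE Hij).
  rewrite -big_distrl /= -sum_margE Hnorm ?mul1r // => i Hi.
  have := Hz i; case: ifP => HiE; first by move=> H; apply/eqP.
  move=> ->; apply: Hb.
    by apply/bigcupP; exists j.
  rewrite eqc inE HiE orbF; apply/negP => Hij.
  by move/setP/(_ i): (HEC j); rewrite !inE Hij Hi.
rewrite -sum_margE; apply: IH.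
  by move: HS; rewrite (cardsD1 j S) Hj.
move=> i /bigcupP [k Hk Hik] Hni; apply: Hb.
  by apply/bigcupP; exists k => //; move: Hk; rewrite inE => /andP [].
rewrite eqc inE (negbTE Hni) orbF; apply/negP => Hij.
by move/setP/(_ i): (nosink k (setD1_in Hk)); rewrite !inE Hij Hik.
Qed.

Definition normed (R : realFieldType) (N : nat) (g : spqn R N) :=
  forall b : input N, (forall i, i \in cond g -> b i != None) -> sum_marg (eff g) b (eval g) = 1.

Lemma sc_sub (R : Type) (N : nat) (g : spqn R N) i : i \in sc g -> i \in eff g :|: cond g.
Proof. by rewrite /cond !inE; case: (i \in eff g). Qed.

Lemma main (R : realFieldType) (N : nat) (g : spqn R N) :
  all_nodes (@weights_ok R N) g -> all_nodes (@cond_complete_node R N) g ->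
  all_nodes (@cond_decomposable_node R N) g -> all_nodes (@cond_sound_node R N) g ->
  normed g.
Proof.
elim/spqn_ind2: g.
- move=> i a _ _ _ _ b _ /=.
  pose b' : input N := [ffun k => if k == i then Some a else b k].
  rewrite sum_margE (eq_bigr (fun z : input N => if z i == Some a then 1 else 0)); last first.
    move=> z /mdomP Hz; have := Hz i; rewrite set11 /=.
    by case: (z i) => // c _.
  rewrite -big_mkcondr /=.
  rewrite (big_pred1 b') // => z /=; apply/andP/eqP.
  + move=> [/mdomP Hz /eqP Hzi]; apply/ffunP => k; rewrite ffunE.
    case: eqP => [->|/eqP Hk] //; by have := Hz k; rewrite inE (negbTE Hk).
  + move=> ->; split; last by rewrite ffunE eqxx.
    by apply/mdomP => k; rewrite inE ffunE; case: eqP.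
- move=> cs IH [[_ Hw1] Hws] [Hc Hcs] [_ Hds] [_ Hss] b Hb.
  pose p0 := (0 : R, dflt R N).
  have IHi : forall i : 'I_(size cs), normed (nth p0 cs i).2.
    move=> i; apply: (proj1 (forallS_nth _ cs) IH p0 i (ltn_ord i)).
    + exact: (proj1 (forallS_nth (all_nodes (@weights_ok R N)) cs) Hws p0 i (ltn_ord i)).
    + exact: (proj1 (forallS_nth (all_nodes (@cond_complete_node R N)) cs) Hcs p0 i (ltn_ord i)).
    + exact: (proj1 (forallS_nth (all_nodes (@cond_decomposable_node R N)) cs) Hds p0 i (ltn_ord i)).
    + exact: (proj1 (forallS_nth (all_nodes (@cond_sound_node R N)) cs) Hss p0 i (ltn_ord i)).
  have Hc' : forall j k : 'I_(size cs), eff (nth p0 cs j).2 = eff (nth p0 cs k).2.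
    by move=> j k; have := Hc j k; rewrite !(nth_map p0) ?ltn_ord.
  have Heff : forall i : 'I_(size cs), eff (SSum cs) = eff (nth p0 cs i).2.
    move=> i; rewrite (effS _ p0); apply/setP => x; apply/bigcupP/idP => [[k _ Hx]|Hx].
      by rewrite -(Hc' k i).
    by exists i.
  rewrite sum_margE (eq_bigr _ (fun z _ => evalS cs z)) exchange_big.
  transitivity (\sum_(i < size cs) (nth p0 cs i).1).
    apply: eq_bigr => i _; rewrite -mulr_sumr -sum_margE (Heff i) IHi ?mulr1 //.
    move=> x; rewrite /cond inE => /andP [Hx1 Hx2]; apply: Hb.
    rewrite /cond inE (Heff i) Hx1 (scS _ p0); apply/bigcupP; by exists i.
  by rewrite -Hw1 (big_nth p0 xpredT (fun p => p.1)) big_mkord.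
- move=> cs IH [_ Hws] [_ Hcs] [[Hdisj Hacyc] Hds] [_ Hss] b Hb.
  have IHi : forall i : 'I_(size cs), normed (nth (dflt R N) cs i).
    move=> i; apply: (proj1 (forallP_nth _ cs) IH (dflt R N) i (ltn_ord i)).
    + exact: (proj1 (forallP_nth (all_nodes (@weights_ok R N)) cs) Hws (dflt R N) i (ltn_ord i)).
    + exact: (proj1 (forallP_nth (all_nodes (@cond_complete_node R N)) cs) Hcs (dflt R N) i (ltn_ord i)).
    + exact: (proj1 (forallP_nth (all_nodes (@cond_decomposable_node R N)) cs) Hds (dflt R N) i (ltn_ord i)).
    + exact: (proj1 (forallP_nth (all_nodes (@cond_sound_node R N)) cs) Hss (dflt R N) i (ltn_ord i)).
  pose fE := fun k : 'I_(size cs) => eff (nth (dflt R N) cs k).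
  pose fC := fun k : 'I_(size cs) => cond (nth (dflt R N) cs k).
  pose f := fun k : 'I_(size cs) => eval (nth (dflt R N) cs k).
  have Hloc : forall k (x y : input N), (forall i, i \in fE k :|: fC k -> x i = y i) -> f k x = f k y.
    by move=> k x y H; apply: eval_local => i Hi; apply: H; exact: sc_sub.
  have HEC : forall k, fE k :&: fC k = set0.
    move=> k; apply/setP => i; rewrite /fE /fC /cond !inE.
    by case: (i \in eff (nth (dflt R N) cs k)).
  have H := prod_norm (S := [set: 'I_(size cs)]) (b := b) Hloc IHi HEC Hdisj Hacyc.
  have E1 : \bigcup_(k in [set: 'I_(size cs)]) fE k = \bigcup_(i < size cs) eff (nth (dflt R N) cs i).
    by apply: eq_bigl => k; rewrite in_setT.
  rewrite sum_margE (eq_bigr _ (fun z _ => evalP cs z)) effP.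
  move: H; rewrite E1 sum_margE (eq_bigr (fun z => \prod_(i < size cs) eval (nth (dflt R N) cs i) z)).
    apply.
    move=> i /bigcupP [k _ Hik] Hni; apply: Hb.
    rewrite /cond inE effP; apply/andP; split; first exact: Hni.
    rewrite scP; apply/bigcupP; exists k => //.
    by move: Hik; rewrite /fC /cond inE => /andP [].
  by move=> z _; apply: eq_bigl => k; rewrite in_setT.
- move=> n d _ _ _ _ _ [[Hpos [Hcc [Hee Hsum]]] _] b Hb.
  rewrite sum_margE (eq_bigr (fun z : input N => eval n z * (eval d b)^-1)); last first.
    move=> z /mdomP Hz /=; rewrite (@eval_local R N d z b) // => i Hi.
    move: (Hz i); case Hie: (i \in eff (SQuot n d)); last by [].
    move=> _.
    exfalso; change ((i \in eff n :\: eff d) = true) in Hie.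
    move: Hie; rewrite inE => /andP [Hnd Hn].
    move/sc_sub: Hi; rewrite inE => /orP [Hd|Hc]; first by rewrite Hd in Hnd.
    by move/subsetP/(_ i Hc): Hcc; rewrite /cond inE Hn.
  by rewrite -mulr_suml -sum_margE -Hsum divff // gt_eqF.
Qed.

Lemma all_nodes_lift (R : Type) (N : nat) (P1 P2 P3 P4 Q : spqn R N -> Prop) (g : spqn R N) :
  (forall v, all_nodes P1 v -> all_nodes P2 v -> all_nodes P3 v -> all_nodes P4 v -> Q v) ->
  all_nodes P1 g -> all_nodes P2 g -> all_nodes P3 g -> all_nodes P4 g -> all_nodes Q g.
Proof.
move=> H; elim/spqn_ind2: g.
- by move=> i a H1 H2 H3 H4; split => //; apply: H.
- move=> cs IH H1 H2 H3 H4; split; first exact: H.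
  apply: (proj2 (forallS_nth (all_nodes Q) cs)) => x0 i Hi.
  apply: (proj1 (forallS_nth _ cs) IH x0 i Hi).
  + exact: (proj1 (forallS_nth (all_nodes P1) cs) (proj2 H1) x0 i Hi).
  + exact: (proj1 (forallS_nth (all_nodes P2) cs) (proj2 H2) x0 i Hi).
  + exact: (proj1 (forallS_nth (all_nodes P3) cs) (proj2 H3) x0 i Hi).
  + exact: (proj1 (forallS_nth (all_nodes P4) cs) (proj2 H4) x0 i Hi).
- move=> cs IH H1 H2 H3 H4; split; first exact: H.
  apply: (proj2 (forallP_nth (all_nodes Q) cs)) => x0 i Hi.
  apply: (proj1 (forallP_nth _ cs) IH x0 i Hi).
  + exact: (proj1 (forallP_nth (all_nodes P1) cs) (proj2 H1) x0 i Hi).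
  + exact: (proj1 (forallP_nth (all_nodes P2) cs) (proj2 H2) x0 i Hi).
  + exact: (proj1 (forallP_nth (all_nodes P3) cs) (proj2 H3) x0 i Hi).
  + exact: (proj1 (forallP_nth (all_nodes P4) cs) (proj2 H4) x0 i Hi).
- move=> n d IHn IHd [H1 [H1n H1d]] [H2 [H2n H2d]] [H3 [H3n H3d]] [H4 [H4n H4d]].
  split; first by apply: H; split.
  by split; [apply: IHn | apply: IHd].
Qed.

Unset Implicit Arguments.
Set Strict Implicit.

Theorem theorem1 (R : realFieldType) (N : nat) (G : spqn R N) :
  spqn_valid G -> cond_complete G -> cond_decomposable G -> cond_sound G ->
  all_nodes (fun v : spqn R N =>
    forall b : input N,
      (forall i, i \in cond v -> b i != None) ->
      (forall i, i \notin cond v -> b i = None) ->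
      sum_marg (eff v) b (eval v) = 1) G.
Proof.
move=> HW HC HD HS.
apply: (all_nodes_lift _ HW HC HD HS) => v H1 H2 H3 H4 b Hb _.
exact: (main H1 H2 H3 H4).
Qed.
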